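(* Let $\alpha=\alpha(s)$ be a timelike unit speed curve in $\mathbb{S}_1^3$ with geodesic curvature $\kappa_g>0$ and geodesic torsion $\tau_g\neq0$. Then $\alpha$ is congruent to a timelike rectifying curve if and only if $$\frac{\tau_g}{\kappa_g}(s)=\mu_1\sinh(s+s_0)+\mu_2\cosh(s+s_0)$$ for some constants $\mu_1,\mu_2,s_0$ with $\mu_2^2-\mu_1^2<1$.
   Context: Minkowski 4-space $\mathbb{R}_1^4$ is $\mathbb{R}^4$ with $\langle x,y\rangle=-x_1y_1+x_2y_2+x_3y_3+x_4y_4$, $\|x\|=\sqrt{|\langle x,x\rangle|}$. De Sitter 3-space is $\mathbb{S}_1^3=\{x:\langle x,x\rangle=1\}$ with Levi-Civita connection $\overline\nabla$. For a timelike unit speed curve $\alpha(s)$ in $\mathbb{S}_1^3$ ($\langle\alpha',\alpha'\rangle=-1$): $T_\alpha=\alpha'$, $\kappa_g=\|T_\alpha'-\alpha\|$, $N_\alpha=(T_\alpha'-\alpha)/\kappa_g$ (spacelike), $B_\alpha=\alpha\times T_\alpha\times N_\alpha$ (the formal determinant with first row $(-e_1,e_2,e_3,e_4)$ and rows $\alpha,T_\alpha,N_\alpha$), $\tau_g=\langle\overline\nabla_{T_\alpha}N_\alpha,B_\alpha\rangle=\det(\alpha,\alpha',\alpha'',\alpha''')/\kappa_g^2$; Frenet equations $T_\alpha'=\alpha+\kappa_gN_\alpha$, $N_\alpha'=\kappa_gT_\alpha+\tau_gB_\alpha$, $B_\alpha'=-\tau_gN_\alpha$. A timelike non-geodesic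 curve $\alpha$ is a timelike rectifying curve if there is a fixed point $p\in\mathbb{S}_1^3$ with $\pm p\notin\mathrm{Im}(\alpha)$ such that for every $s$ the tangent vector at $\alpha(s)$ of the geodesic of $\mathbb{S}_1^3$ joining $p$ and $\alpha(s)$ is pseudo-orthogonal to $N_\alpha(s)$ (i.e. this geodesic is pseudo-orthogonal to the principal normal geodesic $\cos(t)\alpha(s)+\sin(t)N_\alpha(s)$ at $\alpha(s)$). Congruence is by isometries of $\mathbb{S}_1^3$. *)

(* Defs.v *)
From HB Require Import structures.
From mathcomp Require Import all_boot all_order all_algebra.
From mathcomp Require Import all_classical all_reals all_analysis.
Set Implicit Arguments. Unset Strict Implicit. Unset Printing Implicit Defensive.
Import Order.TTheory GRing.Theory Num.Theory.
Import numFieldNormedType.Exports.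
Local Open Scope classical_set_scope.
Local Open Scope ring_scope.

Section Minkowski.
Variable R : realType.
Notation V := 'rV[R]_4.

Definition mink (x y : V) : R :=
  - (x ord0 ord0 * y ord0 ord0) + \sum_(i < 4 | i != ord0) x ord0 i * y ord0 i.

Definition mnorm (x : V) : R := Num.sqrt `| mink x x |.

Definition sinh (x : R) : R := (expR x - expR (- x)) / 2.
Definition cosh (x : R) : R := (expR x + expR (- x)) / 2.

Definition smooth_on (I : set R) (a : R -> V) : Prop :=
  forall (n : nat) (s : R), I s -> derivable (iter n (@derive1 R V) a) s 1.

Definition timelike_unit_speed_deSitter (I : set R) (a : R -> V) : Prop :=
  smooth_on I a /\
  (forall s, I s -> mink (a s) (a s) = 1) /\
  (forall s, I s -> mink (derive1 a s) (derive1 a s) = -1).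

Definition Tf (a : R -> V) : R -> V := derive1 a.
Definition kappa_g (a : R -> V) (s : R) : R := mnorm (derive1 (Tf a) s - a s).
Definition Nf (a : R -> V) (s : R) : V := (kappa_g a s)^-1 *: (derive1 (Tf a) s - a s).

Definition det4 (u0 u1 u2 u3 : V) : R :=
  \det (\matrix_(i < 4, j < 4)
          (nth u0 [:: u0; u1; u2; u3] i) ord0 j).

Definition tau_g (a : R -> V) (s : R) : R :=
  det4 (a s) (derive1 a s) (derive1 (derive1 a) s) (derive1 (derive1 (derive1 a)) s) / (kappa_g a s) ^+ 2.

(* tangent direction at x of the geodesic of S^3_1 joining p and x
   (the projection of p onto T_x S^3_1, defined up to a nonzero factor) *)
Definition geod_dir (p x : V) : V := p - mink p x *: x.

Definition timelike_rectifying (I : set R) (b : R -> V) : Prop :=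
  timelike_unit_speed_deSitter I b /\
  (* non-geodesic: the principal normal is defined everywhere *)
  (forall s, I s -> kappa_g b s != 0) /\
  exists p : V, mink p p = 1 /\
    (forall s, I s -> b s <> p /\ b s <> - p) /\
    (forall s, I s -> mink (geod_dir p (b s)) (Nf b s) = 0).

(* isometries of S^3_1: restrictions of linear isometries of R^4_1 *)
Definition lorentz (A : 'M[R]_4) : Prop :=
  forall x y : V, mink (x *m A) (y *m A) = mink x y.

Definition congruent_to_timelike_rectifying (I : set R) (a : R -> V) : Prop :=
  exists A : 'M[R]_4, lorentz A /\ timelike_rectifying I (fun s => a s *m A).

End Minkowski.

(* Main.v *)
Require Import Defs.
From HB Require Import structures.
From mathcomp Require Import all_boot all_order all_algebra.
From mathcomp Require Import all_classical all_reals all_analysis.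
From mathcomp Require Import ring lra.
Import Order.TTheory GRing.Theory Num.Theory.
Import numFieldNormedType.Exports.
Local Open Scope classical_set_scope.
Local Open Scope ring_scope.
Set Implicit Arguments. Unset Strict Implicit. Unset Printing Implicit Defensive.

Section Alg.
Variable R : realType.

Definition detF (F : nat -> nat -> R) :=
 F 0%N 0%N * F 1%N 1%N * F 2%N 2%N * F 3%N 3%N - F 0%N 0%N * F 1%N 1%N * F 2%N 3%N * F 3%N 2%N - F 0%N 0%N * F 1%N 2%N * F 2%N 1%N * F 3%N 3%N + F 0%N 0%N * F 1%N 2%N * F 2%N 3%N * F 3%N 1%N + F 0%N 0%N * F 1%N 3%N * F 2%N 1%N * F 3%N 2%N - F 0%N 0%N * F 1%N 3%N * F 2%N 2%N * F 3%N 1%N - F 0%N 1%N * F 1%N 0%N * F 2%N 2%N * F 3%N 3%N + F 0%N 1%N * F 1%N 0%N * F 2%N 3%N * F 3%N 2%N + F 0%N 1%N * F 1%N 2%N * F 2%N 0%N * F 3%N 3%N - F 0%N 1%N * F 1%N 2%N * F 2%N 3%N * F 3%N 0%N - F 0%N 1%N * F 1%N 3%N * F 2%N 0%N * F 3%N 2%N + F 0%N 1%N * F 1%N 3%N * F 2%N 2%N * F 3%N 0%N + F 0%N 2%N * F 1%N 0%N * F 2%N 1%N * F 3%N 3%N - F 0%N 2%N * F 1%N 0%N * F 2%N 3%N * F 3%N 1%N - F 0%N 2%N * F 1%N 1%N * F 2%N 0%N * F 3%N 3%N + F 0%N 2%N * F 1%N 1%N * F 2%N 3%N * F 3%N 0%N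 + F 0%N 2%N * F 1%N 3%N * F 2%N 0%N * F 3%N 1%N - F 0%N 2%N * F 1%N 3%N * F 2%N 1%N * F 3%N 0%N - F 0%N 3%N * F 1%N 0%N * F 2%N 1%N * F 3%N 2%N + F 0%N 3%N * F 1%N 0%N * F 2%N 2%N * F 3%N 1%N + F 0%N 3%N * F 1%N 1%N * F 2%N 0%N * F 3%N 2%N - F 0%N 3%N * F 1%N 1%N * F 2%N 2%N * F 3%N 0%N - F 0%N 3%N * F 1%N 2%N * F 2%N 0%N * F 3%N 1%N + F 0%N 3%N * F 1%N 2%N * F 2%N 1%N * F 3%N 0%N.

Lemma detF4 (F : nat -> nat -> R) :
  \det (\matrix_(i < 4, j < 4) F i j) = detF F.
Proof.
rewrite (expand_det_row _ ord0) !big_ord_recl big_ord0 /cofactor.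
rewrite !(expand_det_row _ ord0) !big_ord_recl !big_ord0 /cofactor.
rewrite !(expand_det_row _ ord0) !big_ord_recl !big_ord0 /cofactor.
rewrite !det_mx11 !mxE /=.
rewrite /bump /=. rewrite /detF. ring. Qed.


End Alg.

Section Alg1.
Variable R : realType.
Notation V := 'rV[R]_4.
Definition cc_def (u : V) (n : nat) : R := u ord0 (inord n).
Fact cc_key : unit. Proof. by []. Qed.
Definition cc := locked_with cc_key cc_def.
Lemma ccu (u : V) n : cc u n = u ord0 (inord n).
Proof. by rewrite /cc unlock. Qed.

Lemma ccE (u : V) (k : 'I_4) : u ord0 k = cc u k.
Proof. by rewrite ccu inord_val. Qed.

Lemma minkE u v : mink u v =
  - (cc u 0%N * cc v 0%N) + cc u 1%N * cc v 1%N + cc u 2%N * cc v 2%N + cc u 3%N * cc v 3%N.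
Proof.
rewrite /mink big_mkcond !big_ord_recl big_ord0 /= !ccE /=.
rewrite /bump /=; ring.
Qed.

Lemma det4E u0 u1 u2 u3 : det4 u0 u1 u2 u3 =
  detF (fun i j => cc (nth u0 [:: u0; u1; u2; u3] i) j).
Proof.
rewrite /det4 -detF4; congr (\det _); apply/matrixP => i j; rewrite !mxE ccE //.
Qed.

Lemma ccD (u v : V) n : cc (u + v) n = cc u n + cc v n.
Proof. by rewrite !ccu mxE. Qed.
Lemma ccN (u : V) n : cc (- u) n = - cc u n.
Proof. by rewrite !ccu mxE. Qed.
Lemma ccB (u v : V) n : cc (u - v) n = cc u n - cc v n.
Proof. by rewrite !ccu !mxE. Qed.
Lemma ccZ (r : R) (u : V) n : cc (r *: u) n = r * cc u n.
Proof. by rewrite !ccu mxE. Qed.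

Definition gram (u0 u1 u2 u3 v0 v1 v2 v3 : V) :=
  \det (\matrix_(i < 4, j < 4)
     mink (nth u0 [:: u0; u1; u2; u3] i) (nth v0 [:: v0; v1; v2; v3] j)).

Lemma gramE u0 u1 u2 u3 v0 v1 v2 v3 : gram u0 u1 u2 u3 v0 v1 v2 v3 =
  detF (fun i j => mink (nth u0 [:: u0; u1; u2; u3] i) (nth v0 [:: v0; v1; v2; v3] j)).
Proof. by rewrite /gram -detF4. Qed.

Lemma gram_det u0 u1 u2 u3 v0 v1 v2 v3 :
  det4 u0 u1 u2 u3 * det4 v0 v1 v2 v3 = - gram u0 u1 u2 u3 v0 v1 v2 v3.
Proof.
set M := \matrix_(i < 4, j < 4) (nth u0 [:: u0; u1; u2; u3] i) ord0 j.
set N := \matrix_(i < 4, j < 4)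
   ((if j == ord0 then -1 else 1) * (nth v0 [:: v0; v1; v2; v3] i) ord0 j).
have hN : \det N = - det4 v0 v1 v2 v3.
  rewrite (_ : \det N = detF (fun i j => (if j == 0%N then -1 else 1) *
        cc (nth v0 [:: v0; v1; v2; v3] i) j)).
    by rewrite det4E /detF /=; ring.
  by rewrite -detF4; congr (\det _); apply/matrixP => i j; rewrite !mxE ccE.
have hM : \det M = det4 u0 u1 u2 u3 by [].
have hG : M *m N^T = \matrix_(i < 4, j < 4)
     mink (nth u0 [:: u0; u1; u2; u3] i) (nth v0 [:: v0; v1; v2; v3] j).
  apply/matrixP => i j; rewrite !mxE minkE !big_ord_recl big_ord0 /M /N.
  rewrite !mxE !ccE /=; rewrite /bump /=; ring.
rewrite /gram -hG det_mulmx det_tr hN -hM; ring.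
Qed.

End Alg1.

Section Alg2.
Variable R : realType.
Notation V := 'rV[R]_4.

Lemma minkC (u v : V) : mink u v = mink v u.
Proof. rewrite !minkE; ring. Qed.

Lemma minkBB (u v : V) : mink (u - v) (u - v) = mink u u - 2 * mink u v + mink v v.
Proof. rewrite !minkE !ccB; ring. Qed.

Lemma minkBr (u v w : V) : mink u (v - w) = mink u v - mink u w.
Proof. rewrite !minkE !ccB; ring. Qed.
Lemma minkBl (u v w : V) : mink (v - w) u = mink v u - mink w u.
Proof. rewrite !minkE !ccB; ring. Qed.
Lemma minkZr (u v : V) r : mink u (r *: v) = r * mink u v.
Proof. rewrite !minkE !ccZ; ring. Qed.
Lemma minkZl (u v : V) r : mink (r *: v) u = r * mink v u.
Proof. rewrite !minkE !ccZ; ring. Qed.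
Lemma minkNl (u v : V) : mink (- v) u = - mink v u.
Proof. rewrite !minkE !ccN; ring. Qed.
Lemma minkNr (u v : V) : mink u (- v) = - mink u v.
Proof. rewrite !minkE !ccN; ring. Qed.

Lemma lin_eq (A B C D k : R) : A = B -> C - D = k * (A - B) -> C = D.
Proof. by move=> -> h; apply/eqP; rewrite -subr_eq0 h subrr mulr0. Qed.

Lemma spacelike (y t : V) : mink y t = 0 -> mink t t = -1 -> 0 <= mink y y.
Proof.
rewrite !minkE.
move: (cc y 0%N) (cc y 1%N) (cc y 2%N) (cc y 3%N) (cc t 0%N) (cc t 1%N) (cc t 2%N) (cc t 3%N)
  => y0 y1 y2 y3 t0 t1 t2 t3 h1 h2.
have ht0 : t0 ^+ 2 = 1 + (t1^+2 + t2^+2 + t3^+2) by apply: (lin_eq (k := -1) h2); ring.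
have hs : y0 * t0 = y1 * t1 + y2 * t2 + y3 * t3 by apply: (lin_eq (k := -1) h1); ring.
have lag : (y1^+2 + y2^+2 + y3^+2) * (t1^+2 + t2^+2 + t3^+2) - (y1 * t1 + y2 * t2 + y3 * t3)^+2
   = (y1*t2 - y2*t1)^+2 + (y1*t3 - y3*t1)^+2 + (y2*t3-y3*t2)^+2 by ring.
have hpos : 0 <= (y1*t2 - y2*t1)^+2 + (y1*t3 - y3*t1)^+2 + (y2*t3-y3*t2)^+2.
  by rewrite !addr_ge0 ?sqr_ge0.
have key : 0 <= (- (y0 * y0) + y1 * y1 + y2 * y2 + y3 * y3) * t0 ^+ 2.
  have -> : (- (y0 * y0) + y1 * y1 + y2 * y2 + y3 * y3) * t0 ^+ 2
     = (y1^+2 + y2^+2 + y3^+2) + ((y1^+2 + y2^+2 + y3^+2) * (t1^+2 + t2^+2 + t3^+2)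
         - (y0 * t0)^+2).
    by apply: (lin_eq (k := y1^+2+y2^+2+y3^+2) ht0); ring.
  rewrite hs lag; apply: addr_ge0 => //.
  by rewrite !addr_ge0 ?sqr_ge0.
have t0p : 0 < t0 ^+ 2.
  rewrite ht0; have : 0 <= t1^+2 + t2^+2 + t3^+2 by rewrite !addr_ge0 ?sqr_ge0.
  lra.
by rewrite -(pmulr_lge0 _ t0p).
Qed.

End Alg2.

Section An.
Variable R : realType.
Notation V := 'rV[R]_4.

Lemma Dext (f : R -> R) (s a b : R) : is_derive s 1 f a -> a = b -> is_derive s 1 f b.
Proof. by move=> h <-. Qed.

Lemma Dadd (f g : R -> R) (s a b : R) : is_derive s 1 f a -> is_derive s 1 g b ->
  is_derive s 1 (fun t => f t + g t) (a + b).
Proof. move=> ha hb; exact: (is_deriveD ha hb). Qed.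

Lemma Dmul (f g : R -> R) (s a b : R) : is_derive s 1 f a -> is_derive s 1 g b ->
  is_derive s 1 (fun t => f t * g t) (a * g s + f s * b).
Proof.
move=> ha hb; apply: (Dext (is_deriveM ha hb)).
rewrite /GRing.scale /=. ring.
Qed.

Lemma Dopp (f : R -> R) (s a : R) : is_derive s 1 f a ->
  is_derive s 1 (fun t => - f t) (- a).
Proof. move=> ha; exact: (is_deriveN ha). Qed.

Lemma Dcst (c s : R) : is_derive s 1 (fun _ : R => c) 0.
Proof. exact: is_derive_cst. Qed.

Lemma Did (s : R) : is_derive s 1 (fun t : R => t) 1.
Proof. exact: is_derive_id. Qed.


Lemma Dcc (u : R -> V) (s : R) n : derivable u s 1 ->
  is_derive s 1 (fun t => cc (u t) n) (cc (derive1 u s) n).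
Proof.
move=> du.
have -> : (fun t => cc (u t) n) = (fun t => u t ord0 (inord n)).
  by apply/funext => t; rewrite ccu.
have hd : derivable (fun t => u t ord0 (inord n)) s 1.
  by move/derivable_mxP : du => /(_ ord0 (inord n)).
apply: DeriveDef => //.
by rewrite !ccu derive1E derive_mx // mxE.
Qed.


Ltac dstep H := first [ eapply Dcst | eapply H | eapply Dadd | eapply Dmul | eapply Dopp ].

Lemma Dmink (u v : R -> V) (s : R) : derivable u s 1 -> derivable v s 1 ->
  is_derive s 1 (fun t => mink (u t) (v t))
    (mink (derive1 u s) (v s) + mink (u s) (derive1 v s)).
Proof.
move=> du dv.
have hu n := Dcc n du; have hv n := Dcc n dv.
rewrite (_ : (fun t => mink (u t) (v t)) = fun t =>
  - (cc (u t) 0%N * cc (v t) 0%N) + cc (u t) 1%N * cc (v t) 1%N + cc (u t) 2%N * cc (v t) 2%N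
   + cc (u t) 3%N * cc (v t) 3%N); last by apply/funext => t; rewrite minkE.
eapply Dext.
  repeat first [ eapply Dcst | eapply hu | eapply hv | eapply Dadd | eapply Dmul | eapply Dopp ].
rewrite !minkE; ring.
Qed.

Lemma Dminkc (q : V) (u : R -> V) (s : R) : derivable u s 1 ->
  is_derive s 1 (fun t => mink q (u t)) (mink q (derive1 u s)).
Proof.
move=> du.
have hu n := Dcc n du.
rewrite (_ : (fun t => mink q (u t)) = fun t =>
  - (cc q 0%N * cc (u t) 0%N) + cc q 1%N * cc (u t) 1%N + cc q 2%N * cc (u t) 2%N
   + cc q 3%N * cc (u t) 3%N); last by apply/funext => t; rewrite minkE.
eapply Dext.
  repeat first [ eapply Dcst | eapply hu | eapply Dadd | eapply Dmul | eapply Dopp ].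
rewrite !minkE; ring.
Qed.

Lemma Ddet (u v w : R -> V) (x : V) (s : R) :
  derivable u s 1 -> derivable v s 1 -> derivable w s 1 ->
  is_derive s 1 (fun t => det4 (u t) (v t) (w t) x)
    (det4 (derive1 u s) (v s) (w s) x + det4 (u s) (derive1 v s) (w s) x
     + det4 (u s) (v s) (derive1 w s) x).
Proof.
move=> du dv dw.
have hu n := Dcc n du; have hv n := Dcc n dv; have hw n := Dcc n dw.
rewrite (_ : (fun t => det4 (u t) (v t) (w t) x) = fun t =>
   detF (fun i j => cc (nth (u t) [:: u t; v t; w t; x] i) j)); last first.
  by apply/funext => t; rewrite det4E.
rewrite /detF /=. idtac.
eapply Dext.
  repeat first [ eapply Dcst | eapply hu | eapply hv | eapply hw
               | eapply Dadd | eapply Dmul | eapply Dopp ].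
rewrite !det4E /detF /=. cbv beta. (move: (derive1 u s) (derive1 v s) (derive1 w s) (u s) (v s) (w s) => U' V' W' U V W). ring. Qed.



Lemma deriv_uniq (I : set R) (f g : R -> R) (s a b : R) : open I -> I s ->
  (forall t, I t -> f t = g t) -> is_derive s 1 f a -> is_derive s 1 g b -> a = b.
Proof.
move=> oI Is fg ha hb.
have hI : nbhs s I by apply: open_nbhs_nbhs; split.
have fgn : \near s, f s = g s by apply: filterS hI => t It; exact: fg.
have := near_eq_is_derive fgn ha.
by case=> _ <-; case: hb => _ <-.
Qed.

Lemma const_itv (I : set R) (f : R -> R) : is_interval I ->
  (forall t, I t -> is_derive t 1 f 0) -> forall x y, I x -> I y -> f x = f y.
Proof.
move=> iI hd.
have key : forall x y, x < y -> I x -> I y -> f x = f y.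
  move=> x y xy Ix Iy.
  have sub : forall z, x <= z <= y -> I z by move=> z; exact: iI.
  have h1 : forall z, z \in `]x, y[ -> is_derive z 1 f ((fun _ => 0 : R) z).
    move=> z; rewrite in_itv /= => /andP[xz zy]; apply: hd; apply: sub.
    by rewrite !ltW.
  have h2 : {within `[x, y], continuous f}.
    apply: derivable_within_continuous => z; rewrite in_itv /= => /andP[xz zy].
    by have [] := hd z (sub z (introT andP (conj xz zy))).
  have [c _ ] := MVT xy h1 h2.
  by rewrite mul0r => /eqP; rewrite subr_eq0 => /eqP.
move=> x y Ix Iy; case: (ltgtP x y) => [xy|yx|->] //.
  exact: key.
by apply/esym; apply: key.
Qed.

End An.

Section Aux.
Variable R : realType.
Notation V := 'rV[R]_4.

Definition mkv (x0 x1 x2 x3 : R) : V := \row_(j < 4) nth 0 [:: x0; x1; x2; x3] j.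

Lemma ccmk x0 x1 x2 x3 n : (n < 4)%N -> cc (mkv x0 x1 x2 x3) n = nth 0 [:: x0; x1; x2; x3] n.
Proof. by move=> hn; rewrite ccu mxE inordK. Qed.

Lemma ccmk0 x0 x1 x2 x3 : cc (mkv x0 x1 x2 x3) 0%N = x0. Proof. by rewrite ccmk. Qed.
Lemma ccmk1 x0 x1 x2 x3 : cc (mkv x0 x1 x2 x3) 1%N = x1. Proof. by rewrite ccmk. Qed.
Lemma ccmk2 x0 x1 x2 x3 : cc (mkv x0 x1 x2 x3) 2%N = x2. Proof. by rewrite ccmk. Qed.
Lemma ccmk3 x0 x1 x2 x3 : cc (mkv x0 x1 x2 x3) 3%N = x3. Proof. by rewrite ccmk. Qed.

Definition Wv (u v w : V) : V :=
  mkv (- det4 u v w (mkv 1 0 0 0)) (det4 u v w (mkv 0 1 0 0))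
      (det4 u v w (mkv 0 0 1 0)) (det4 u v w (mkv 0 0 0 1)).

Lemma minkW (u v w y : V) : mink y (Wv u v w) = det4 u v w y.
Proof.
rewrite minkE /Wv !ccmk0 !ccmk1 !ccmk2 !ccmk3 !det4E /detF /=.
rewrite !ccmk0 !ccmk1 !ccmk2 !ccmk3.
move: (cc u 0%N) (cc u 1%N) (cc u 2%N) (cc u 3%N)
  (cc v 0%N) (cc v 1%N) (cc v 2%N) (cc v 3%N) (cc w 0%N) (cc w 1%N) (cc w 2%N) (cc w 3%N)
  (cc y 0%N) (cc y 1%N) (cc y 2%N) (cc y 3%N) => *; ring.
Qed.

Lemma det4_lin (u v w x y : V) (r s : R) :
  det4 u v w (r *: x + s *: y) = r * det4 u v w x + s * det4 u v w y.
Proof.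
rewrite !det4E /detF /= !ccD !ccZ.
move: (cc u 0%N) (cc u 1%N) (cc u 2%N) (cc u 3%N)
  (cc v 0%N) (cc v 1%N) (cc v 2%N) (cc v 3%N) (cc w 0%N) (cc w 1%N) (cc w 2%N) (cc w 3%N)
  (cc x 0%N) (cc x 1%N) (cc x 2%N) (cc x 3%N) (cc y 0%N) (cc y 1%N) (cc y 2%N) (cc y 3%N) => *; ring.
Qed.

Lemma det4_rep3 (u v w : V) (r s : R) : det4 u v w (r *: u + s *: w) = 0.
Proof.
rewrite !det4E /detF /= !ccD !ccZ.
move: (cc u 0%N) (cc u 1%N) (cc u 2%N) (cc u 3%N)
  (cc v 0%N) (cc v 1%N) (cc v 2%N) (cc v 3%N) (cc w 0%N) (cc w 1%N) (cc w 2%N) (cc w 3%N) => *; ring.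
Qed.

Lemma minkmk (x0 x1 x2 x3 : R) (y : V) :
  mink (mkv x0 x1 x2 x3) y = - (x0 * cc y 0%N) + x1 * cc y 1%N + x2 * cc y 2%N + x3 * cc y 3%N.
Proof. by rewrite minkE !ccmk0 !ccmk1 !ccmk2 !ccmk3. Qed.

Lemma vec_eq (u v : V) : (forall n, (n < 4)%N -> cc u n = cc v n) -> u = v.
Proof. by move=> h; apply/rowP => j; rewrite !ccE; apply: h; exact: ltn_ord. Qed.

Lemma Dsh (s0 t : R) : is_derive t 1 (fun t => sinh (t + s0)) (cosh (t + s0)).
Proof.
have hA := is_derive1_comp (g := fun t => t + s0) (x := t) (is_derive_expR (t + s0)) (Dadd (Did t) (Dcst s0 t)).
have hB := is_derive1_comp (g := fun t => - (t + s0)) (x := t) (is_derive_expR (- (t + s0))) (Dopp (Dadd (Did t) (Dcst s0 t))).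
have h := Dmul (Dadd hA (Dopp hB)) (Dcst (2^-1) t).
apply: (Dext h); rewrite /cosh /=.
move: (expR (t + s0)) (expR (- (t + s0))) => x y; ring.
Qed.

Lemma Dch (s0 t : R) : is_derive t 1 (fun t => cosh (t + s0)) (sinh (t + s0)).
Proof.
have hA := is_derive1_comp (g := fun t => t + s0) (x := t) (is_derive_expR (t + s0)) (Dadd (Did t) (Dcst s0 t)).
have hB := is_derive1_comp (g := fun t => - (t + s0)) (x := t) (is_derive_expR (- (t + s0))) (Dopp (Dadd (Did t) (Dcst s0 t))).
have h := Dmul (Dadd hA hB) (Dcst (2^-1) t).
apply: (Dext h); rewrite /sinh /=.
move: (expR (t + s0)) (expR (- (t + s0))) => x y; ring.
Qed.

Lemma chsh (u : R) : cosh u ^+ 2 - sinh u ^+ 2 = 1.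
Proof.
rewrite /cosh /sinh; have := expRxMexpNx_1 u.
move: (expR u) (expR (- u)) => x y h.
have -> : ((x + y) / 2) ^+ 2 - ((x - y) / 2) ^+ 2 = x * y by field.
exact: h.
Qed.

Lemma minkDr (u v w : V) : mink u (v + w) = mink u v + mink u w.
Proof. rewrite !minkE !ccD; ring. Qed.

Lemma det4_repN (u v w : V) : det4 u v w (- u) = 0.
Proof.
rewrite !det4E /detF /= !ccN.
move: (cc u 0%N) (cc u 1%N) (cc u 2%N) (cc u 3%N)
  (cc v 0%N) (cc v 1%N) (cc v 2%N) (cc v 3%N) (cc w 0%N) (cc w 1%N) (cc w 2%N) (cc w 3%N) => *; ring.
Qed.

End Aux.

Section Curve.
Variable R : realType.
Notation V := 'rV[R]_4.
Variables (I : set R) (a a1 a2 a3 : R -> V).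
Hypothesis oI : open I.
Hypothesis e1 : derive1 a = a1.
Hypothesis e2 : derive1 a1 = a2.
Hypothesis e3 : derive1 a2 = a3.
Hypothesis d0 : forall s, I s -> derivable a s 1.
Hypothesis d1 : forall s, I s -> derivable a1 s 1.
Hypothesis d2 : forall s, I s -> derivable a2 s 1.
Hypothesis g00 : forall s, I s -> mink (a s) (a s) = 1.
Hypothesis g11 : forall s, I s -> mink (a1 s) (a1 s) = -1.

Lemma Dmk (u u' v v' : R -> V) s : derivable u s 1 -> derivable v s 1 ->
  derive1 u = u' -> derive1 v = v' ->
  is_derive s 1 (fun t => mink (u t) (v t)) (mink (u' s) (v s) + mink (u s) (v' s)).
Proof. by move=> du dv <- <-; exact: Dmink. Qed.

Lemma kapE s : kappa_g a s = Num.sqrt `|mink (a2 s - a s) (a2 s - a s)|.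
Proof. by rewrite /kappa_g /mnorm /Tf e1 e2. Qed.

Lemma cderiv (f : R -> R) c s d : I s -> (forall t, I t -> f t = c) ->
  is_derive s 1 f d -> d = 0.
Proof.
move=> Is hf hd; exact: (deriv_uniq oI Is hf hd (Dcst c s)).
Qed.

Lemma g01 s : I s -> mink (a s) (a1 s) = 0.
Proof.
move=> Is; have := cderiv Is g00 (Dmk (d0 Is) (d0 Is) e1 e1).
rewrite (minkC (a1 s)) => /eqP; rewrite -mulr2n -mulr_natl mulf_eq0 => /orP[|/eqP//].
by rewrite pnatr_eq0.
Qed.

Lemma g12 s : I s -> mink (a1 s) (a2 s) = 0.
Proof.
move=> Is; have := cderiv Is g11 (Dmk (d1 Is) (d1 Is) e2 e2).
rewrite (minkC (a2 s)) => /eqP; rewrite -mulr2n -mulr_natl mulf_eq0 => /orP[|/eqP//].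
by rewrite pnatr_eq0.
Qed.

Lemma g02 s : I s -> mink (a s) (a2 s) = 1.
Proof.
move=> Is; have := cderiv Is g01 (Dmk (d0 Is) (d1 Is) e1 e2).
rewrite g11 // => /eqP; rewrite addrC subr_eq0 => /eqP //.
Qed.

Lemma g13 s : I s -> mink (a1 s) (a3 s) = - mink (a2 s) (a2 s).
Proof.
move=> Is; have := cderiv Is g12 (Dmk (d1 Is) (d2 Is) e2 e3).
by move/eqP; rewrite addrC addr_eq0 => /eqP.
Qed.

Lemma g03 s : I s -> mink (a s) (a3 s) = 0.
Proof.
move=> Is; have := cderiv Is g02 (Dmk (d0 Is) (d2 Is) e1 e3).
by rewrite g12 // add0r.
Qed.

Lemma kap_pos s : I s -> 0 < kappa_g a s -> 0 < mink (a2 s) (a2 s) - 1.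
Proof.
move=> Is hk.
have e : mink (a2 s - a s) (a2 s - a s) = mink (a2 s) (a2 s) - 1.
  rewrite minkBB (minkC (a2 s)) g02 // g00 //; ring.
have sp : 0 <= mink (a2 s - a s) (a2 s - a s).
  apply: (spacelike (t := a1 s)); last exact: g11.
  by rewrite minkBl (minkC (a2 s)) g12 // g01 // subrr.
rewrite e in sp.
by move: hk; rewrite kapE e ger0_norm // sqrtr_gt0.
Qed.

Lemma kap2 s : I s -> 0 < kappa_g a s -> kappa_g a s ^+ 2 = mink (a2 s) (a2 s) - 1.
Proof.
move=> Is hk; have p := kap_pos Is hk.
have e : mink (a2 s - a s) (a2 s - a s) = mink (a2 s) (a2 s) - 1.
  rewrite minkBB (minkC (a2 s)) g02 // g00 //; ring.
by rewrite kapE e ger0_norm ?sqr_sqrtr // ltW.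
Qed.


Hypothesis hk : forall s, I s -> 0 < kappa_g a s.

Lemma kap_sqrt t : I t -> kappa_g a t = Num.sqrt (mink (a2 t) (a2 t) - 1).
Proof.
move=> It; rewrite -kap2 // ?hk // sqrtr_sqr ger0_norm //; exact/ltW/hk.
Qed.

Lemma kderiv s : I s ->
  is_derive s 1 (kappa_g a) (mink (a2 s) (a3 s) / kappa_g a s).
Proof.
move=> Is.
pose h := fun t => mink (a2 t) (a2 t) + (-1).
have hd : is_derive s 1 h (mink (a3 s) (a2 s) + mink (a2 s) (a3 s) + 0).
  exact: Dadd (Dmk (d2 Is) (d2 Is) e3 e3) (Dcst _ _).
have hp : 0 < h s by rewrite /h; exact: kap_pos (hk Is).
have hc := is_derive1_comp (is_derive1_sqrt hp) hd.
have hI : nbhs s I by apply: open_nbhs_nbhs; split.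
have nb : \near s, (Num.sqrt \o h) s = kappa_g a s.
  by apply: filterS hI => t It /=; rewrite kap_sqrt.
have hc2 := near_eq_is_derive nb hc.
have ek1 : kappa_g a s = Num.sqrt (h s) := kap_sqrt Is.
have ek2 : mink (a3 s) (a2 s) = mink (a2 s) (a3 s) by rewrite minkC.
have x0 : Num.sqrt (h s) != 0 by rewrite sqrtr_eq0 -ltNge.
apply: (Dext hc2).
rewrite ek1 ek2.
move: (Num.sqrt (h s)) (mink (a2 s) (a3 s)) x0 => x y x0.
by field.
Qed.


Ltac normmink Is :=
  rewrite ?(minkC (a1 _) (a _)) ?(minkC (a2 _) (a _)) ?(minkC (a3 _) (a _))
          ?(minkC (a2 _) (a1 _)) ?(minkC (a3 _) (a1 _)) ?(minkC (a3 _) (a2 _));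
  rewrite ?(g00 Is) ?(g01 Is) ?(g02 Is) ?(g03 Is) ?(g11 Is) ?(g12 Is) ?(g13 Is).

Lemma ID3 s x : I s -> det4 (a s) (a1 s) (a2 s) (a3 s) != 0 ->
  (mink (a2 s) (a2 s) - 1) * det4 (a s) (a1 s) (a3 s) x
    - mink (a2 s) (a3 s) * det4 (a s) (a1 s) (a2 s) x
  = - det4 (a s) (a1 s) (a2 s) (a3 s) * (mink (a2 s) x - mink (a s) x).
Proof.
move=> Is n3; apply: (mulIf n3).
have h1 := gram_det (a s) (a1 s) (a2 s) (a3 s) (a s) (a1 s) (a3 s) x.
have h2 := gram_det (a s) (a1 s) (a2 s) (a3 s) (a s) (a1 s) (a2 s) x.
have h3 := gram_det (a s) (a1 s) (a2 s) (a3 s) (a s) (a1 s) (a2 s) (a3 s).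
rewrite gramE /detF /= in h1; rewrite gramE /detF /= in h2; rewrite gramE /detF /= in h3.
move: h1 h2 h3; normmink Is => h1 h2 h3.
move: (det4 (a s) (a1 s) (a2 s) (a3 s)) (det4 (a s) (a1 s) (a3 s) x)
  (det4 (a s) (a1 s) (a2 s) x) h1 h2 h3 n3 => D3 Y Dx h1 h2 h3 n3.
have -> : ((mink (a2 s) (a2 s) - 1) * Y - mink (a2 s) (a3 s) * Dx) * D3
  = (mink (a2 s) (a2 s) - 1) * (D3 * Y) - mink (a2 s) (a3 s) * (D3 * Dx) by ring.
have -> : (- D3 * (mink (a2 s) x - mink (a s) x)) * D3
  = - ((mink (a2 s) x - mink (a s) x) * (D3 * D3)) by ring.
rewrite h1 h2 h3.
move: (mink (a2 s) (a2 s)) (mink (a2 s) (a3 s)) (mink (a3 s) (a3 s))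
  (mink (a s) x) (mink (a1 s) x) (mink (a2 s) x) (mink (a3 s) x) => m22 w z X0 X1 X2 X3.
ring.
Qed.


Lemma IDp s p f f' : I s -> mink p (a s) = f -> mink p (a1 s) = f' -> mink p (a2 s) = f ->
  det4 (a s) (a1 s) (a2 s) p * det4 (a s) (a1 s) (a2 s) (a3 s)
  = (mink (a2 s) (a2 s) - 1) * (mink p (a3 s) - f' * mink (a2 s) (a2 s)).
Proof.
move=> Is hp0 hp1 hp2.
rewrite gram_det gramE /detF /=.
normmink Is; rewrite hp0 hp1 hp2.
move: (mink (a2 s) (a2 s)) (mink (a2 s) (a3 s)) (mink (a3 s) (a3 s)) (mink p (a3 s))
  => m22 w z y.
ring.
Qed.

Lemma IDq2 s q f f' : I s -> mink q (a s) = f -> mink q (a1 s) = f' -> mink q (a2 s) = f ->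
  mink q q = 1 ->
  det4 (a s) (a1 s) (a2 s) q ^+ 2 = (mink (a2 s) (a2 s) - 1) * (1 - f ^+ 2 + f' ^+ 2).
Proof.
move=> Is hp0 hp1 hp2 hqq.
rewrite expr2 gram_det gramE /detF /=.
rewrite (minkC (a s) q) (minkC (a1 s) q) (minkC (a2 s) q).
normmink Is; rewrite hp0 hp1 hp2 hqq.
move: (mink (a2 s) (a2 s)) => m22.
ring.
Qed.


Lemma det4_rep01 (u v x : V) : det4 u u v x = 0.
Proof. rewrite det4E /detF /=; move: (cc u 0%N) (cc u 1%N) (cc u 2%N) (cc u 3%N)
  (cc v 0%N) (cc v 1%N) (cc v 2%N) (cc v 3%N) (cc x 0%N) (cc x 1%N) (cc x 2%N) (cc x 3%N) => *; ring. Qed.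
Lemma det4_rep12 (u v x : V) : det4 u v v x = 0.
Proof. rewrite det4E /detF /=; move: (cc u 0%N) (cc u 1%N) (cc u 2%N) (cc u 3%N)
  (cc v 0%N) (cc v 1%N) (cc v 2%N) (cc v 3%N) (cc x 0%N) (cc x 1%N) (cc x 2%N) (cc x 3%N) => *; ring. Qed.
Lemma det4_rep03 (u v x : V) : det4 u v x u = 0.
Proof. rewrite det4E /detF /=; move: (cc u 0%N) (cc u 1%N) (cc u 2%N) (cc u 3%N)
  (cc v 0%N) (cc v 1%N) (cc v 2%N) (cc v 3%N) (cc x 0%N) (cc x 1%N) (cc x 2%N) (cc x 3%N) => *; ring. Qed.
Lemma det4_rep13 (u v x : V) : det4 v u x u = 0.
Proof. rewrite det4E /detF /=; move: (cc u 0%N) (cc u 1%N) (cc u 2%N) (cc u 3%N)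
  (cc v 0%N) (cc v 1%N) (cc v 2%N) (cc v 3%N) (cc x 0%N) (cc x 1%N) (cc x 2%N) (cc x 3%N) => *; ring. Qed.
Lemma det4_rep23 (u v x : V) : det4 v x u u = 0.
Proof. rewrite det4E /detF /=; move: (cc u 0%N) (cc u 1%N) (cc u 2%N) (cc u 3%N)
  (cc v 0%N) (cc v 1%N) (cc v 2%N) (cc v 3%N) (cc x 0%N) (cc x 1%N) (cc x 2%N) (cc x 3%N) => *; ring. Qed.

Lemma DD s x : I s ->
  is_derive s 1 (fun t => det4 (a t) (a1 t) (a2 t) x) (det4 (a s) (a1 s) (a3 s) x).
Proof.
move=> Is; apply: (Dext (Ddet x (d0 Is) (d1 Is) (d2 Is))).
by rewrite e1 e2 e3 det4_rep01 det4_rep12 !add0r.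
Qed.

Lemma Dmkc (q : V) (u u' : R -> V) s : derivable u s 1 -> derive1 u = u' ->
  is_derive s 1 (fun t => mink q (u t)) (mink q (u' s)).
Proof. by move=> du <-; exact: Dminkc. Qed.

Lemma DexpN (t : R) : is_derive t 1 (fun t => expR (- t)) (- expR (- t)).
Proof.
have h := is_derive1_comp (is_derive_expR (- t)) (Dopp (Did t)).
by apply: (Dext h); rewrite mulrN1.
Qed.

Lemma Dexp (t : R) : is_derive t 1 (fun t => expR t) (expR t).
Proof. exact: is_derive_expR. Qed.

Lemma tauE s : tau_g a s = det4 (a s) (a1 s) (a2 s) (a3 s) / kappa_g a s ^+ 2.
Proof. by rewrite /tau_g e1 e2 e3. Qed.


Lemma kne0 s : I s -> kappa_g a s != 0.
Proof. by move=> Is; rewrite gt_eqF // hk. Qed.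

Lemma D3ne0 s : I s -> tau_g a s != 0 -> det4 (a s) (a1 s) (a2 s) (a3 s) != 0.
Proof. by move=> Is; rewrite tauE; apply: contra => /eqP ->; rewrite mul0r. Qed.

Lemma fwd (q : V) : is_interval I -> I !=set0 -> (forall s, I s -> tau_g a s != 0) ->
  mink q q = 1 -> (forall s, I s -> mink q (a2 s - a s) = 0) ->
  exists mu1 mu2 s0 : R, mu2 ^+ 2 - mu1 ^+ 2 < 1 /\
    forall s, I s -> tau_g a s / kappa_g a s = mu1 * sinh (s + s0) + mu2 * cosh (s + s0).
Proof.
move=> iI [s1 Is1] ht hqq hq.
have hq2 t : I t -> mink q (a2 t) = mink q (a t).
  by move=> It; have := hq t It; rewrite minkBr => /eqP; rewrite subr_eq0 => /eqP.
pose f t := mink q (a t).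
pose f1 t := mink q (a1 t).
have df t : I t -> is_derive t 1 f (f1 t).
  by move=> It; exact: (Dmkc q (d0 It) e1).
have df1 t : I t -> is_derive t 1 f1 (f t).
  by move=> It; rewrite /f -hq2 //; exact: (Dmkc q (d1 It) e2).
have hq3 t : I t -> mink q (a3 t) = f1 t.
  move=> It; have h2 := Dmkc q (d2 It) e3.
  exact: (deriv_uniq oI It (g := f) hq2 h2 (df t It)).
pose E1 t := (f t + f1 t) * expR (- t).
have dE1 t : I t -> is_derive t 1 E1 0.
  move=> It; apply: (Dext (Dmul (Dadd (df t It) (df1 t It)) (DexpN t))).
  rewrite /f /f1; move: (mink q (a t)) (mink q (a1 t)) (expR (- t)) => x y z; ring.
pose E2 t := (f t - f1 t) * expR t.
have dE2 t : I t -> is_derive t 1 E2 0.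
  move=> It; apply: (Dext (Dmul (Dadd (df t It) (Dopp (df1 t It))) (Dexp t))).
  rewrite /f /f1; move: (mink q (a t)) (mink q (a1 t)) (expR t) => x y z; ring.
pose P1 := E1 s1; pose P2 := E2 s1.
have hsum t : I t -> f t + f1 t = P1 * expR t.
  move=> It; have := const_itv iI dE1 It Is1; rewrite -/P1 /E1 => <-.
  by rewrite -mulrA [expR (- t) * _]mulrC expRxMexpNx_1 mulr1.
have hdif t : I t -> f t - f1 t = P2 * expR (- t).
  move=> It; have := const_itv iI dE2 It Is1; rewrite -/P2 /E2 => <-.
  by rewrite -mulrA expRxMexpNx_1 mulr1.
pose D t := det4 (a t) (a1 t) (a2 t) q.
pose L t := D t * (kappa_g a t)^-1.
have dL t : I t -> is_derive t 1 L 0.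
  move=> It.
  have h := Dmul (DD q It) (is_deriveV (kne0 It) (kderiv It)).
  apply: (Dext h).
  have i3 := ID3 q It (D3ne0 It (ht t It)).
  rewrite (minkC (a2 t) q) (minkC (a t) q) hq2 // subrr mulr0 in i3.
  rewrite -kap2 // ?hk // in i3.
  rewrite /GRing.scale /=.
  move: (kappa_g a t) (kne0 It) (det4 (a t) (a1 t) (a3 t) q) (det4 (a t) (a1 t) (a2 t) q)
    (mink (a2 t) (a3 t)) i3 => k k0 Y Dd w i3.
  have -> : Y = w * Dd / k ^+ 2.
    apply: (mulIf (expf_neq0 2 k0)); rewrite divfK ?expf_neq0 //.
    by apply/eqP; rewrite -subr_eq0 mulrC; apply/eqP.
  by field.
pose m := L s1.
have hL t : I t -> L t = m by move=> It; have := const_itv iI dL It Is1.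
have hD t : I t -> D t = m * kappa_g a t.
  by move=> It; rewrite -(hL t It) /L mulrVK // unitfE kne0.
have hm2' : m ^+ 2 = 1 - f s1 ^+ 2 + f1 s1 ^+ 2.
  have h := IDq2 Is1 (erefl (f s1)) (erefl (f1 s1)) (hq2 s1 Is1) hqq.
  rewrite -kap2 ?hk // -/(D s1) hD // in h.
  by move: h; rewrite exprMn mulrC => /(mulfI (expf_neq0 2 (kne0 Is1))).
have hm2 : m ^+ 2 = 1 - P1 * P2.
  rewrite hm2'.
  have -> : f s1 ^+ 2 = f1 s1 ^+ 2 + (f s1 + f1 s1) * (f s1 - f1 s1) by ring.
  rewrite hsum // hdif //.
  have := expRxMexpNx_1 s1.
  move: (expR s1) (expR (- s1)) (f1 s1) => x y z h; rewrite -[P1 * P2]mulr1 -h; ring.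
have hDD t : I t -> D t * det4 (a t) (a1 t) (a2 t) (a3 t) = - kappa_g a t ^+ 4 * f1 t.
  move=> It; have h := IDp It (erefl (f t)) (erefl (f1 t)) (hq2 t It).
  rewrite hq3 // in h; rewrite /D h.
  have k2 := kap2 It (hk It).
  have -> : mink (a2 t) (a2 t) = kappa_g a t ^+ 2 + 1 by rewrite k2; ring.
  move: (kappa_g a t) (f1 t) => k y; ring.
have m0 : m != 0.
  apply/negP => /eqP m0.
  have f10 t : I t -> f1 t = 0.
    move=> It; have := hDD t It; rewrite hD // m0 mul0r mul0r => /eqP.
    by rewrite eq_sym mulf_eq0 oppr_eq0 expf_eq0 /= (negbTE (kne0 It)) /= => /eqP.
  have f0 : f s1 = 0 by have := cderiv Is1 f10 (df1 s1 Is1).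
  by move: hm2'; rewrite m0 f0 (f10 s1 Is1) !expr2 !mul0r; lra.
exists (- (P1 + P2) / (2 * m)), (- (P1 - P2) / (2 * m)), 0.
split.
  have h : - (P1 * P2) = m ^+ 2 - 1 by rewrite hm2; ring.
  have -> : (- (P1 - P2) / (2 * m)) ^+ 2 - (- (P1 + P2) / (2 * m)) ^+ 2
      = (m ^+ 2 - 1) / m ^+ 2.
    by rewrite -h; field.
  have mp : 0 < m ^+ 2 by rewrite exprn_even_gt0.
  rewrite ltr_pdivrMr // mul1r; lra.
move=> t It; rewrite addr0 /sinh /cosh tauE.
have h := hDD t It; rewrite hD // in h.
have hf1 : f1 t = (P1 * expR t - P2 * expR (- t)) / 2.
  by rewrite -hsum // -hdif //; move: (f t) (f1 t) => x y; field.
have k0 := kne0 It.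
rewrite hf1 in h.
have -> : det4 (a t) (a1 t) (a2 t) (a3 t)
    = - kappa_g a t ^+ 3 * ((P1 * expR t - P2 * expR (- t)) / 2) / m.
  apply: (mulIf m0); rewrite divfK //.
  apply: (mulfI k0).
  have -> : kappa_g a t * (det4 (a t) (a1 t) (a2 t) (a3 t) * m)
     = m * kappa_g a t * det4 (a t) (a1 t) (a2 t) (a3 t) by ring.
  rewrite h; ring.
move: (kappa_g a t) k0 (expR t) (expR (- t)) => k k0 x y.
by field; rewrite m0 k0.
Qed.


Lemma bwd (mu1 mu2 s0 : R) : is_interval I -> I !=set0 -> (forall s, I s -> tau_g a s != 0) ->
  mu2 ^+ 2 - mu1 ^+ 2 < 1 ->
  (forall s, I s -> tau_g a s / kappa_g a s = mu1 * sinh (s + s0) + mu2 * cosh (s + s0)) ->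
  exists p : V, mink p p = 1 /\ (forall s, I s -> a s <> p /\ a s <> - p) /\
    (forall s, I s -> mink p (a2 s - a s) = 0).
Proof.
move=> iI [s1 Is1] ht hmu htau.
pose r := 1 + mu1 ^+ 2 - mu2 ^+ 2.
have rp : 0 < r by rewrite /r; lra.
pose c := (Num.sqrt r)^-1.
have c2 : c ^+ 2 * r = 1.
  by rewrite /c exprVn sqr_sqrtr ?ltW // mulVf // gt_eqF.
have c0 : c != 0 by rewrite invr_eq0 sqrtr_eq0 -ltNge.
pose g t := mu1 * sinh (t + s0) + mu2 * cosh (t + s0).
pose F t := - c * (mu1 * cosh (t + s0) + mu2 * sinh (t + s0)).
pose F1 t := - c * g t.
have dF (t : R) : is_derive t 1 F (F1 t).
  apply: (Dext (Dmul (Dcst (- c) t) (Dadd (Dmul (Dcst mu1 t) (Dch s0 t))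
                                        (Dmul (Dcst mu2 t) (Dsh s0 t))))).
  rewrite /F1 /g /=; move: (sinh (t + s0)) (cosh (t + s0)) => x y; ring.
have dF1 (t : R) : is_derive t 1 F1 (F t).
  apply: (Dext (Dmul (Dcst (- c) t) (Dadd (Dmul (Dcst mu1 t) (Dsh s0 t))
                                        (Dmul (Dcst mu2 t) (Dch s0 t))))).
  rewrite /F /=; move: (sinh (t + s0)) (cosh (t + s0)) => x y; ring.
pose phi (x : V) t := F t * mink x (a t) - F1 t * mink x (a1 t)
   + c * (det4 (a t) (a1 t) (a2 t) x * (kappa_g a t)^-1).
have dphi (x : V) (t : R) : I t -> is_derive t 1 (phi x) 0.
  move=> It.
  have h := Dadd (Dadd (Dmul (dF t) (Dmkc x (d0 It) e1))
                       (Dopp (Dmul (dF1 t) (Dmkc x (d1 It) e2))))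
                 (Dmul (Dcst c t) (Dmul (DD x It) (is_deriveV (kne0 It) (kderiv It)))).
  apply: (Dext h).
  have i3 := ID3 x It (D3ne0 It (ht t It)).
  rewrite -kap2 ?hk // (minkC (a2 t) x) (minkC (a t) x) in i3.
  have hD3 : det4 (a t) (a1 t) (a2 t) (a3 t) = g t * kappa_g a t ^+ 3.
    have := htau t It; rewrite tauE -/(g t) => <-.
    by field; rewrite kne0.
  rewrite hD3 in i3.
  rewrite /GRing.scale /= /F1.
  move: (kappa_g a t) (kne0 It) (det4 (a t) (a1 t) (a3 t) x) (det4 (a t) (a1 t) (a2 t) x)
    (mink (a2 t) (a3 t)) (mink x (a t)) (mink x (a1 t)) (mink x (a2 t)) (g t) (F t) i3
    => k k0 Y Dd w X0 X1 X2 gg FF i3.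
  have -> : Y = (w * Dd - gg * k ^+ 3 * (X2 - X0)) / k ^+ 2.
    apply: (mulIf (expf_neq0 2 k0)); rewrite divfK ?expf_neq0 //.
    by apply: (lin_eq (k := 1) i3); ring.
  by field.
pose P t := F t *: a t - F1 t *: a1 t
   + (c * (kappa_g a t)^-1) *: Wv (a t) (a1 t) (a2 t).
have hP x t : mink x (P t) = phi x t.
  rewrite /P /phi minkDr minkBr !minkZr minkW; ring.
have Pc t : I t -> P t = P s1.
  move=> It; apply: vec_eq => n hn.
  have key : forall x, mink x (P t) = mink x (P s1).
    by move=> x; rewrite !hP; have := const_itv iI (dphi x) It Is1.
  case: n hn => [|[|[|[|n]]]] // _.
  - by have := key (mkv 1 0 0 0); rewrite !minkmk; lra.
  - by have := key (mkv 0 1 0 0); rewrite !minkmk; lra.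
  - by have := key (mkv 0 0 1 0); rewrite !minkmk; lra.
  - by have := key (mkv 0 0 0 1); rewrite !minkmk; lra.
pose p := P s1.
have hpa t : I t -> mink p (a t) = F t.
  move=> It; rewrite minkC /p -(Pc t It) hP /phi g00 // g01 // det4_rep03.
  ring.
have hpa1 t : I t -> mink p (a1 t) = F1 t.
  move=> It; rewrite minkC /p -(Pc t It) hP /phi (minkC (a1 t) (a t)) g01 // g11 // det4_rep13.
  ring.
have hpa2 t : I t -> mink p (a2 t) = F t.
  move=> It; rewrite minkC /p -(Pc t It) hP /phi (minkC (a2 t) (a t)) g02 //.
  rewrite (minkC (a2 t) (a1 t)) g12 // det4_rep23; ring.
have hpa3 t : I t -> mink p (a3 t) =
    F1 t * mink (a2 t) (a2 t) + c * det4 (a t) (a1 t) (a2 t) (a3 t) * (kappa_g a t)^-1.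
  move=> It; rewrite minkC /p -(Pc t It) hP /phi (minkC (a3 t) (a t)) g03 //.
  rewrite (minkC (a3 t) (a1 t)) g13 //; ring.
have hDp t : I t -> det4 (a t) (a1 t) (a2 t) p = c * kappa_g a t.
  move=> It; have h := IDp It (hpa t It) (hpa1 t It) (hpa2 t It).
  rewrite hpa3 // in h.
  have n3 := D3ne0 It (ht t It).
  apply: (mulIf n3); rewrite h -kap2 ?hk //.
  have k0 := kne0 It.
  move: (kappa_g a t) k0 (mink (a2 t) (a2 t)) (det4 (a t) (a1 t) (a2 t) (a3 t)) (F1 t) => k k0 m22 D3 y.
  by field.
exists p; split.
  have : mink p p = phi p s1 by rewrite {2}/p hP.
  rewrite /phi (minkC p (a s1)) (minkC p (a1 s1)).
  rewrite (minkC (a s1) p) (minkC (a1 s1) p) hpa // hpa1 // hDp // => ->.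
  have k0 := kne0 Is1.
  have hch := chsh (s1 + s0).
  rewrite /F1 /F /g.
  move: (kappa_g a s1) k0 (sinh (s1 + s0)) (cosh (s1 + s0)) hch => k k0 x y hch.
  rewrite mulfK // -c2 /r.
  by apply: (lin_eq (k := c ^+ 2 * (mu1 ^+ 2 - mu2 ^+ 2)) hch); ring.
split.
  move=> t It; have := hDp t It; have k0 := kne0 It; split => e.
    by move: H; rewrite -e det4_rep03 => /esym /eqP; rewrite mulf_eq0 (negbTE c0) (negbTE k0).
  have ep : p = - a t by rewrite e opprK.
  by move: H; rewrite ep det4_repN => /esym /eqP; rewrite mulf_eq0 (negbTE c0) (negbTE k0).
move=> t It; rewrite minkBr hpa2 // hpa // subrr //.
Qed.

End Curve.

Section Mx.
Variable R : realType.
Notation V := 'rV[R]_4.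

Definition Em : 'M[R]_4 := diag_mx (mkv (-1) 1 1 1).

Lemma minkM (x y : V) : mink x y = (x *m Em *m y^T) ord0 ord0.
Proof.
rewrite minkE /Em mul_mx_diag !mxE !big_ord_recl big_ord0 !mxE !ccE /=.
rewrite /bump /=; ring.
Qed.

Lemma entry_mulT (M N : 'M[R]_4) i j : (M *m N^T) i j = (row i M *m (row j N)^T) ord0 ord0.
Proof. by rewrite !mxE; apply: eq_bigr => k _; rewrite !mxE. Qed.

Lemma EmEm : Em *m Em = 1%:M.
Proof.
rewrite /Em mul_mx_diag; apply/matrixP => i j; rewrite !mxE.
case: i => [[|[|[|[|n]]]] hi] //; case: j => [[|[|[|[|m]]]] hj] //=;
  rewrite ?mulr1n ?mulr0n ?mul0r //; ring.
Qed.

Lemma lorentz_E (A : 'M[R]_4) : lorentz A -> A *m Em *m A^T = Em.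
Proof.
move=> lA; apply/matrixP => i j.
rewrite entry_mulT row_mul -minkM !rowE lA minkM -rowE -[delta_mx 0 j]mulmx1 -rowE.
by rewrite -entry_mulT trmx1 mulmx1.
Qed.

Lemma lorentz_inv (A : 'M[R]_4) : lorentz A -> (Em *m A^T *m Em) *m A = 1%:M.
Proof.
move=> lA; apply: mulmx1C.
by rewrite !mulmxA lorentz_E // EmEm.
Qed.

Lemma mink_q (A : 'M[R]_4) (p y : V) : lorentz A ->
  mink (p *m (Em *m A^T *m Em)) y = mink p (y *m A).
Proof.
move=> lA; rewrite !minkM trmx_mul !mulmxA.
by rewrite -[_ *m Em *m Em]mulmxA EmEm mulmx1.
Qed.

Lemma mink_qq (A : 'M[R]_4) (p : V) : lorentz A ->
  mink (p *m (Em *m A^T *m Em)) (p *m (Em *m A^T *m Em)) = mink p p.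
Proof.
by move=> lA; rewrite mink_q // -mulmxA lorentz_inv // mulmx1.
Qed.

Lemma Dlin (u : R -> V) (A : 'M[R]_4) (s : R) j : derivable u s 1 ->
  is_derive s 1 (fun t => (u t *m A) ord0 j) ((derive1 u s *m A) ord0 j).
Proof.
move=> du; have hu n := Dcc n du.
have e : forall v : V, (v *m A) ord0 j = \sum_(k < 4) cc v k * A k j.
  by move=> v; rewrite mxE; apply: eq_bigr => k _; rewrite ccE.
have h : is_derive s 1 (\sum_(k < 4) (fun t => cc (u t) k * A k j))
                       (\sum_(k < 4) cc (derive1 u s) k * A k j).
  apply: is_derive_sum => k.
  by apply: (Dext (Dmul (hu k) (Dcst _ s))); rewrite mulr0 addr0.
rewrite e.
have -> : (fun t => (u t *m A) ord0 j) = \sum_(k < 4) (fun t => cc (u t) k * A k j).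
  by apply/funext => t; rewrite fct_sumE e.
exact: h.
Qed.

Lemma Dlin2 (u : R -> V) (A : 'M[R]_4) (s : R) : derivable u s 1 ->
  derivable (fun t => u t *m A) s 1 /\ derive1 (fun t => u t *m A) s = derive1 u s *m A.
Proof.
move=> du.
have dd : derivable (fun t => u t *m A) s 1.
  apply/derivable_mxP => i j; rewrite (ord1 i).
  by case: (Dlin A j du).
split => //.
rewrite derive1E derive_mx //; apply/matrixP => i j; rewrite mxE (ord1 i).
by case: (Dlin A j du) => _ ->.
Qed.

End Mx.

Unset Implicit Arguments.

Theorem theorem3p2 (R : realType) (I : set R) (a : R -> 'rV[R]_4) :
  open I -> is_interval I -> I !=set0 ->
  timelike_unit_speed_deSitter I a ->
  (forall s, I s -> 0 < kappa_g a s) ->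
  (forall s, I s -> tau_g a s != 0) ->
  (congruent_to_timelike_rectifying I a <->
   exists mu1 mu2 s0 : R, mu2 ^+ 2 - mu1 ^+ 2 < 1 /\
     forall s, I s ->
       tau_g a s / kappa_g a s = mu1 * sinh (s + s0) + mu2 * cosh (s + s0)).
Proof.
move=> oI iI nI ha hk ht.
have d0 : forall s, I s -> derivable a s 1.
  by move=> s Is; case: ha => h _; exact: (h 0%N s Is).
have d1 : forall s, I s -> derivable (derive1 a) s 1.
  by move=> s Is; case: ha => h _; exact: (h 1%N s Is).
have d2 : forall s, I s -> derivable (derive1 (derive1 a)) s 1.
  by move=> s Is; case: ha => h _; exact: (h 2%N s Is).
have g00 : forall s, I s -> mink (a s) (a s) = 1 by case: ha => _ [h _].
have g11 : forall s, I s -> mink (derive1 a s) (derive1 a s) = -1 by case: ha => _ [_ h].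
have g02' s : I s -> mink (a s) (derive1 (derive1 a) s - a s) = 0.
  move=> Is; rewrite minkBr (g02 oI erefl erefl d0 d1 g00 g11 Is) g00 //; exact: subrr.
split.
- case=> A [lA [_ [_ [p [hpp [_ hgeo]]]]]].
  pose q := p *m (Em R *m A^T *m Em R).
  have hqq : mink q q = 1 by rewrite /q mink_qq.
  apply: (fwd (q := q) oI erefl erefl erefl d0 d1 d2 g00 g11 hk iI nI ht hqq).
  move=> s Is; rewrite /q mink_q //.
  pose b := fun t => a t *m A.
  have hb1 t : I t -> derive1 b t = derive1 a t *m A.
    by move=> It; exact: (Dlin2 A (d0 t It)).2.
  have hI : nbhs s I by apply: open_nbhs_nbhs; split.
  have nb : \near s, (fun t => derive1 a t *m A) s = derive1 b s.
    by apply: filterS hI => t It; rewrite hb1.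
  have hb2 : derive1 (derive1 b) s = derive1 (derive1 a) s *m A.
    rewrite derive1E -(near_eq_derive _ nb) ?oner_neq0 // -derive1E.
    exact: (Dlin2 A (d1 s Is)).2.
  have hkb : kappa_g b s = kappa_g a s.
    by rewrite /kappa_g /Tf hb2 /b -mulmxBl /mnorm lA.
  have := hgeo s Is.
  rewrite -/b /geod_dir /Nf /Tf hb2 hkb /b -mulmxBl minkBl !minkZr minkZl lA g02' // mulr0 mulr0 subr0.
  move/eqP; rewrite mulf_eq0 invr_eq0 (gt_eqF (hk s Is)) /= => /eqP //.
- case=> mu1 [mu2 [s0 [hmu htau]]].
  have [p [hpp [hne hq]]] :=
    bwd oI erefl erefl erefl d0 d1 d2 g00 g11 hk iI nI ht hmu htau.
  exists 1%:M; split; first by move=> x y; rewrite !mulmx1.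
  have -> : (fun s => a s *m 1%:M) = a by apply/funext => s; rewrite mulmx1.
  split => //; split; first by move=> s Is; rewrite gt_eqF // hk.
  exists p; split => //; split => //.
  move=> s Is; rewrite /geod_dir /Nf /Tf minkBl !minkZr minkZl hq // g02' //.
  by rewrite !mulr0 subr0.
Qed.
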